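(* Let $\mathcal{G}_{N,M}=\{G_s\}$ be the set of simple undirected networks on node set $\{1,\dots,N\}$ with exactly $M$ edges (no self-edges, no repeated edges), and let $G^{(0)}\in\mathcal{G}_{N,M}$. For $t\ge 0$ let $\mathbf{G}^{(t)}=(\mathcal{G}_{N,M},\pi^{(t)})$ be the random-network ensemble where $\pi^{(t)}_s$ is the probability that the network obtained from $G^{(0)}$ by $t$ successive independent uniform rewires equals $G_s$. Then $\lim_{t\to\infty}\mathbf{G}^{(t)}=\mathbf{G}_{N,M}$, where $\mathbf{G}_{N,M}=(\mathcal{G}_{N,M},\pi)$ is the Erdős–Rényi ensemble with $\pi_s=1/|\mathcal{G}_{N,M}|$ for all $s$.
   Context: A random-network ensemble is a pair $(\{G_s\},\pi)$ of a finite set of networks and a probability distribution $\pi$ on it. A sequence of ensembles $\mathbf{G}^{(t)}=(\{G_s\},\pi^{(t)})$ converges to $\mathbf{G}=(\{G_s\},\pi)$ iff $\pi^{(t)}\to\pi$. Uniform rewiring is the stochastic map on $\mathcal{G}_{N,M}$ taking a network with edge set $\mathcal{E}$ to the network with edge set $(\mathcal{E}\setminus\{(i,j)\})\cup\{(i',j')\}$, where $(i,j)$ is chosen uniformly at random from $\mathcal{E}$, and then $(i',j')$ is chosen uniformly at random among the $N(N-1)/2-M+1$ node pairs that are not edges of $\mathcal{E}\setminus\{(i,j)\}$ (re-selecting $(i,j)$ allowed). *)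

(* Defs.v *)
From HB Require Import structures.
From mathcomp Require Import all_boot all_order all_algebra.
From mathcomp Require Import all_classical all_reals all_analysis.
Set Implicit Arguments. Unset Strict Implicit. Unset Printing Implicit Defensive.
Import Order.TTheory GRing.Theory Num.Theory.
Local Open Scope ring_scope.

(* A network on nodes 'I_N (i.e. {1..N}) is given by its edge set; an edge
   (i,j) is the unordered pair {i,j}, a 2-element subset of the nodes
   (so no self-edges and no repeated edges). *)
Definition network (N : nat) := {set {set 'I_N}}.

Definition node_pairs (N : nat) : {set {set 'I_N}} :=
  [set e : {set 'I_N} | #|e| == 2%N].

Definition GNM (N M : nat) : {set network N} :=
  [set E : network N | (E \subset node_pairs N) && (#|E| == M)].

(* One-step transition probability of uniform rewiring from E to E':
   choose (i,j) uniformly from E, then (i',j') uniformly among the node pairs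
   that are not edges of E \ {(i,j)}. *)
Definition rewire_prob (R : realType) (N : nat) (E E' : network N) : R :=
  \sum_(e in E)
     \sum_(e' in node_pairs N :\: (E :\ e))
        ((E :\ e) :|: [set e'] == E')%:R
          / (#|E|%:R * #|node_pairs N :\: (E :\ e)|%:R).

Fixpoint rewire_dist (R : realType) (N : nat) (G0 : network N) (t : nat)
  : network N -> R :=
  match t with
  | 0%N => fun s => (s == G0)%:R
  | t'.+1 => fun s => \sum_(E : network N) rewire_dist R G0 t' E * rewire_prob R E s
  end.

(* Main.v *)
Require Import Defs.
From HB Require Import structures.
From mathcomp Require Import all_boot all_order all_algebra.
From mathcomp Require Import all_classical all_reals all_analysis.
From mathcomp Require Import ring lra zify.
Import Order.TTheory GRing.Theory Num.Theory numFieldNormedType.Exports.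
Local Open Scope ring_scope.
Local Open Scope classical_set_scope.

Lemma lim_from_bound (R : realType) (u : nat -> R) (l c : R) (k : nat) :
  (0 < k)%N -> 0 <= c -> c < 1 ->
  (forall t, `|u t - l| <= c ^+ (t %/ k)) -> u @ \oo --> l.
Proof.
move=> k0 c0 c1 hb; apply/cvgrPdist_le => eps eps0.
have hc : `|c| < 1 by rewrite ger0_norm.
have [Q _ HQ] := @cvgr0_norm_le _ _ _ _ _ _ (cvg_expr hc) _ eps0.
exists (Q * k)%N => // t /= Ht.
rewrite distrC; apply: (le_trans (hb t)).
have hQt : (Q <= t %/ k)%N by rewrite leq_divRL.
have hq : `|c ^+ Q| <= eps := HQ Q (leqnn Q).
rewrite ger0_norm in hq; last exact: exprn_ge0.
apply: le_trans hq; apply: ler_wiXn2l => //; exact: ltW.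
Qed.


Fixpoint Pk {R : realType} {T : finType} (P : T -> T -> R) (j : nat) : T -> T -> R :=
  match j with
  | 0%N => fun x y => (x == y)%:R
  | j'.+1 => fun x y => \sum_z Pk P j' x z * P z y
  end.

Lemma sum_delta (R : realType) (T : finType) (F : T -> R) y :
  \sum_x F x * (x == y)%:R = F y.
Proof.
rewrite (bigD1 y) //= eqxx mulr1 big1 ?addr0 // => x /negbTE ->; exact: mulr0.
Qed.

Section Markov.
Variables (R : realType) (T : finType) (S : {set T}) (P : T -> T -> R)
  (mu : nat -> T -> R) (x0 : T).
Hypothesis hP0 : forall x y, 0 <= P x y.
Hypothesis hPS : forall x y, x \in S -> y \notin S -> P x y = 0.
Hypothesis hrow : forall x, x \in S -> \sum_(y in S) P x y = 1.
Hypothesis hcol : forall y, y \in S -> \sum_(x in S) P x y = 1.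
Hypothesis hx0 : x0 \in S.
Hypothesis hmu0 : forall y, mu 0 y = (y == x0)%:R.
Hypothesis hmuS : forall t y, mu t.+1 y = \sum_x mu t x * P x y.

Lemma mu_out t x : x \notin S -> mu t x = 0.
Proof.
elim: t x => [|t IH] x hx; first by rewrite hmu0; case: eqP => // ex; rewrite ex hx0 in hx.
rewrite hmuS big1 // => z _; case hz: (z \in S); first by rewrite hPS ?hz // mulr0.
by rewrite IH ?hz // mul0r.
Qed.

Lemma mu_ge0 t x : 0 <= mu t x.
Proof.
elim: t x => [|t IH] x; first by rewrite hmu0 ler0n.
rewrite hmuS; apply: sumr_ge0 => z _; exact: mulr_ge0.
Qed.

Lemma sumS t (f : T -> R) : \sum_x mu t x * f x = \sum_(x in S) mu t x * f x.
Proof.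
rewrite [RHS]big_mkcond; apply: eq_bigr => x _.
by case hx: (x \in S) => //; rewrite mu_out ?hx // mul0r.
Qed.

Lemma mu_sum t : \sum_(x in S) mu t x = 1.
Proof.
elim: t => [|t IH].
  rewrite (bigD1 x0) //= hmu0 eqxx big1 ?addr0 // => x /andP[_ /negbTE]; by rewrite hmu0 => ->.
under eq_bigr do rewrite hmuS sumS.
rewrite exchange_big /= -[RHS]IH; apply: eq_bigr => x hx.
by rewrite -mulr_sumr hrow // mulr1.
Qed.

Lemma mu_le1 t x : mu t x <= 1.
Proof.
case hx: (x \in S); last by rewrite mu_out ?hx ?ler01.
rewrite -(mu_sum t) (bigD1 x) //= lerDl; apply: sumr_ge0 => *; exact: mu_ge0.
Qed.

Lemma Pk_ge0 j x y : 0 <= Pk P j x y.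
Proof.
elim: j x y => [|j IH] x y /=; first by rewrite ler0n.
apply: sumr_ge0 => z _; exact: mulr_ge0.
Qed.

Lemma Pk_out j x y : x \in S -> y \notin S -> Pk P j x y = 0.
Proof.
elim: j y => [|j IH] y hx hy /=; first by case: eqP => // exy; rewrite -exy hx in hy.
apply: big1 => z _; case hz: (z \in S); first by rewrite hPS ?hz // mulr0.
by rewrite IH ?hz // mul0r.
Qed.

Lemma Pk_col j y : y \in S -> \sum_(x in S) Pk P j x y = 1.
Proof.
elim: j y => [|j IH] y hy /=.
  rewrite (bigD1 y) //= eqxx big1 ?addr0 // => x /andP[_ /negbTE] -> //.
rewrite exchange_big /= -[RHS](hcol _ hy) [RHS]big_mkcond; apply: eq_bigr => z _.
rewrite -mulr_suml; case hz: (z \in S); first by rewrite IH // mul1r.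
by rewrite big1 ?mul0r // => x hx; rewrite Pk_out ?hz.
Qed.

Lemma mu_shift t j y : mu (t + j) y = \sum_(x in S) mu t x * Pk P j x y.
Proof.
elim: j y => [|j IH] y /=; first by rewrite addn0 -sumS sum_delta.
rewrite addnS hmuS.
transitivity (\sum_z \sum_(x in S) mu t x * Pk P j x z * P z y).
  by apply: eq_bigr => z _; rewrite IH mulr_suml.
rewrite exchange_big /=; apply: eq_bigr => x _.
by rewrite mulr_sumr; apply: eq_bigr => z _; rewrite mulrA.
Qed.

Variables (k : nat) (delta : R).
Hypothesis hk : (0 < k)%N.
Hypothesis hd : 0 < delta.
Hypothesis hPk : forall x y, x \in S -> y \in S -> delta <= Pk P k x y.

Let n : R := #|S|%:R.
Let c : R := 1 - delta * n.

Lemma n_gt0 : 0 < n.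
Proof. by rewrite /n ltr0n; apply/card_gt0P; exists x0. Qed.

Lemma c_ge0 : 0 <= c.
Proof.
rewrite /c subr_ge0 -(@Pk_col k x0 hx0).
rewrite (_ : delta * n = \sum_(x in S) delta); last by rewrite sumr_const mulr_natr.
apply: ler_sum => x hx; by apply: hPk.
Qed.

Lemma c_lt1 : c < 1.
Proof. by rewrite /c ltrBlDr ltrDl mulr_gt0 // n_gt0. Qed.

Lemma mu_bound q r y : y \in S -> `|mu (q * k + r) y - n^-1| <= c ^+ q.
Proof.
elim: q r y => [|q IH] r y hy.
  rewrite mul0n add0n expr0.
  have h0 := mu_ge0 r y; have h1 := mu_le1 r y.
  have hn : 0 < n^-1 by rewrite invr_gt0 n_gt0.
  have hn1 : n^-1 <= 1.
    by rewrite invf_le1 ?n_gt0 // /n ler1n; apply/card_gt0P; exists x0.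
  rewrite ler_norml; apply/andP; split; lra.
rewrite mulSn -addnA (addnC k) mu_shift.
set t := (q * k + r)%N.
pose a x := mu t x - n^-1.
pose w x := Pk P k x y - delta.
have e1 : \sum_(x in S) mu t x * Pk P k x y - n^-1 = \sum_(x in S) a x * w x.
  have H : forall x, a x * w x =
      mu t x * Pk P k x y - delta * mu t x - n^-1 * Pk P k x y + n^-1 * delta.
    by move=> x; rewrite /a /w; ring.
  under [RHS]eq_bigr do rewrite H.
  rewrite big_split /= !sumrB -!mulr_sumr mu_sum Pk_col // sumr_const.
  rewrite -mulr_natr -/n.
  have nz : n != 0 by rewrite gt_eqF // n_gt0.
  by field; exact: nz.
rewrite e1 exprS mulrC.
apply: (le_trans (ler_norm_sum _ _ _)).
have hw : forall x, x \in S -> 0 <= w x by move=> x hx; rewrite /w subr_ge0 hPk.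
apply: (@le_trans _ _ (\sum_(x in S) c ^+ q * w x)).
  apply: ler_sum => x hx; rewrite normrM (ger0_norm (hw x hx)).
  by apply: ler_wpM2r; [exact: hw | exact: IH].
by rewrite -mulr_sumr /w sumrB Pk_col // sumr_const -mulr_natr -/n /c.
Qed.

Lemma mu_cvg y : y \in S -> (fun t => mu t y) @ \oo --> (#|S|%:R^-1 : R).
Proof.
move=> hy; apply: (@lim_from_bound _ _ _ c k hk c_ge0 c_lt1) => t.
by rewrite {1}(divn_eq t k); apply: mu_bound.
Qed.

End Markov.

Section Concrete.
Import fintype finset.
Variables (R : realType) (N M : nat).
Hypothesis M0 : (0 < M)%N.

Let pairs := node_pairs N.
Let L (E : network N) e := pairs :\: (E :\ e).
Let K := (#|pairs| - M).+1.
Let X (E : network N) e e' := (E :\ e) :|: [set e'].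

Lemma inGNM (E : network N) : E \in GNM N M = (E \subset pairs) && (#|E| == M).
Proof. by rewrite inE. Qed.

Lemma cardL (E : network N) e : E \in GNM N M -> e \in E -> #|L E e| = K.
Proof.
rewrite inGNM => /andP[sub /eqP cE] he.
have s1 : E :\ e \subset pairs by apply/subsetP => x /setD1P [_ hx]; exact: (subsetP sub).
have -> : L E e = pairs :\: (E :\ e) by [].
rewrite cardsD (_ : pairs :&: (E :\ e) = E :\ e); last by apply/finset.setIidPr.
have := cardsD1 e E; rewrite he cE => h.
have := subset_leq_card sub; rewrite cE /K => h2.
lia.
Qed.

Lemma X_in {E : network N} {e e'} : E \in GNM N M -> e \in E -> e' \in L E e ->
  X E e e' \in GNM N M.
Proof.
rewrite !inGNM /L /X => /andP[sub /eqP cE] he; rewrite inE => /andP[he' hp].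
apply/andP; split.
  rewrite finset.subUset finset.sub1set hp andbT; apply/subsetP => x /setD1P [_ hx]; exact: (subsetP sub).
rewrite finset.setUC cardsU1 he' /=.
have := cardsD1 e E; rewrite he cE /= => h; apply/eqP; lia.
Qed.

Definition cond (E E' : network N) (p : {set 'I_N} * {set 'I_N}) : bool :=
  [&& p.1 \in E, p.2 \in L E p.1 & X E p.1 p.2 == E'].

Lemma cond_swap {E E' : network N} {p} : E \subset pairs -> cond E E' p -> cond E' E (p.2, p.1).
Proof.
case: p => e e' sub /and3P[/= he]; rewrite /L inE => /andP[he' hp] /eqP <-.
have eq1 : X E e e' :\ e' = E :\ e by rewrite /X finset.setUC finset.setU1K.
have eq2 : E :\ e :|: [set e] = E by rewrite finset.setUC finset.setD1K.
rewrite /cond /= /L /X eq1 eq2 eqxx andbT.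
rewrite finset.in_setU finset.in_set1 eqxx orbT /= finset.in_setD finset.setD11 /=.
by move/subsetP: sub; apply.
Qed.

Lemma rp_ge0 (E E' : network N) : 0 <= rewire_prob R E E'.
Proof.
apply: sumr_ge0 => e _; apply: sumr_ge0 => e' _.
by apply: divr_ge0; [exact: ler0n | apply: mulr_ge0; exact: ler0n].
Qed.

Let d : R := (M * K)%:R.

Lemma d_gt0 : 0 < d.
Proof. by rewrite /d ltr0n muln_gt0 M0. Qed.

Lemma rp_eq (E E' : network N) : E \in GNM N M ->
  rewire_prob R E E' = d^-1 * \sum_p (cond E E' p)%:R.
Proof.
move=> hE; rewrite /rewire_prob.
have cE : #|E| = M by move: hE; rewrite inGNM => /andP[_ /eqP].
transitivity (\sum_(e in E) \sum_(e' in L E e) (X E e e' == E')%:R / d).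
  apply: eq_bigr => e he; apply: eq_bigr => e' _.
  by rewrite cE -/(L E e) (@cardL E e hE he) /d natrM.
rewrite mulrC; under eq_bigr do rewrite -mulr_suml.
rewrite -mulr_suml; congr (_ * _).
rewrite pair_big_dep /= big_mkcond; apply: eq_bigr => -[e e'] _ /=.
rewrite /cond /=; case: (e \in E) => //=; case: (e' \in L E e) => //=.
Qed.


Let S := GNM N M.

Lemma sub_pairs {E : network N} : E \in S -> E \subset pairs.
Proof. by rewrite /S inGNM => /andP[]. Qed.

Lemma card_S {E : network N} : E \in S -> #|E| = M.
Proof. by rewrite /S inGNM => /andP[_ /eqP]. Qed.

Lemma rp_sym (E E' : network N) : E \in S -> E' \in S ->
  rewire_prob R E E' = rewire_prob R E' E.
Proof.
move=> hE hE'; rewrite (rp_eq _ _ hE) (rp_eq _ _ hE'); congr (_ * _).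
have sw : injective (fun p : {set 'I_N} * {set 'I_N} => (p.2, p.1)).
  by move=> [a b] [a' b'] [-> ->].
rewrite (reindex_inj sw) /=; apply: eq_bigr => -[e e'] _ /=.
case h1 : (cond E E' (e', e)); case h2 : (cond E' E (e, e')) => //.
  by have := cond_swap (sub_pairs hE) h1; rewrite /= h2.
by have := cond_swap (sub_pairs hE') h2; rewrite /= h1.
Qed.

Lemma cond_X (E E' : network N) p : cond E E' p -> E' = X E p.1 p.2.
Proof. by case/and3P => _ _ /eqP. Qed.

Lemma rp_out {E E' : network N} : E \in S -> E' \notin S -> rewire_prob R E E' = 0.
Proof.
move=> hE hE'; rewrite (rp_eq _ _ hE) big1 ?mulr0 // => -[e e'] _.
case hc: (cond E E' (e, e')) => //.
move: (hc); case/and3P => /= he hl /eqP hx.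
have := X_in hE he hl; rewrite hx => h; by rewrite h in hE'.
Qed.

Lemma rp_row {E : network N} : E \in S -> \sum_(E' in S) rewire_prob R E E' = 1.
Proof.
move=> hE; under eq_bigr do rewrite (rp_eq _ _ hE).
rewrite -mulr_sumr exchange_big /=.
transitivity (d^-1 * \sum_(p | (p.1 \in E) && (p.2 \in L E p.1)) 1).
  congr (_ * _); rewrite [RHS]big_mkcond; apply: eq_bigr => -[e e'] _ /=.
  case h: ((e \in E) && (e' \in L E e)).
    move/andP: h => [he hl]; rewrite (bigD1 (X E e e')) ?X_in //=.
    rewrite /cond /= he hl eqxx /= big1 ?addr0 // => E' /andP[_ hne].
    by rewrite eq_sym (negbTE hne).
  by rewrite big1 // => E' _; rewrite /cond /=; move: h; case: (e \in E) => //=; case: (e' \in L E e).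
rewrite -(pair_big_dep (fun e => e \in E) (fun e e' => e' \in L E e) (fun _ _ => (1:R))).
transitivity (d^-1 * \sum_(e in E) (K%:R : R)).
  congr (_ * _); apply: eq_bigr => e he.
  by rewrite sumr_const (@cardL E e hE he).
rewrite sumr_const (card_S hE) -mulrnA mulnC -/d mulVf //.
by rewrite gt_eqF // d_gt0.
Qed.

Lemma rp_col {E' : network N} : E' \in S -> \sum_(E in S) rewire_prob R E E' = 1.
Proof.
move=> hE'; rewrite -(rp_row hE'); apply: eq_bigr => E hE; exact: rp_sym.
Qed.

Lemma rp_lb {E E' : network N} {p} : E \in S -> cond E E' p -> d^-1 <= rewire_prob R E E'.
Proof.
move=> hE hc; rewrite (rp_eq _ _ hE) (bigD1 p) //= hc mulrDr mulr1 lerDl.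
apply: mulr_ge0; first by rewrite invr_ge0 ltW // d_gt0.
by apply: sumr_ge0 => *; exact: ler0n.
Qed.

Lemma Pk_step j (x y z : network N) :
  Pk (@rewire_prob R N) j x z * rewire_prob R z y <= Pk (@rewire_prob R N) j.+1 x y.
Proof.
rewrite /= (bigD1 z) //= lerDl; apply: sumr_ge0 => w _.
apply: mulr_ge0; last exact: rp_ge0.
by apply: Pk_ge0; exact: rp_ge0.
Qed.

Lemma Pk_lb j : forall E E' : network N, E \in S -> E' \in S ->
  (#|E' :\: E| <= j)%N -> (d^-1) ^+ j <= Pk (@rewire_prob R N) j E E'.
Proof.
have q0 : 0 <= d^-1 by rewrite invr_ge0 ltW // d_gt0.
elim: j => [|j IH] E E' hE hE' hc.
  have : E' :\: E == finset.set0 by rewrite -cards_eq0 -leqn0.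
  rewrite finset.setD_eq0 => sub.
  have : E' == E by rewrite finset.eqEcard (card_S hE) (card_S hE') leqnn andbT.
  by move/eqP => ->; rewrite /= eqxx expr0.
rewrite exprSr.
case: (boolP (E' \subset E)) => sub.
  have eE : E' = E by apply/eqP; rewrite finset.eqEcard (card_S hE) (card_S hE') leqnn andbT.
  subst E'.
  have : (0 < #|E|)%N by rewrite (card_S hE).
  case/card_gt0P => e he.
  have hcd : cond E E (e, e).
    rewrite /cond /= he /L /X finset.in_setD finset.setD11 /=.
    rewrite finset.setUC finset.setD1K // eqxx andbT.
    by move/subsetP: (sub_pairs hE); apply.
  apply: le_trans (Pk_step j _ _ E).
  apply: ler_pM => //; first exact: exprn_ge0.
    apply: IH => //; by rewrite finset.setDv finset.cards0.
  exact: rp_lb hcd.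
have [e' he'E' he'E] := subsetPn sub.
have sub2 : ~~ (E \subset E').
  apply/negP => s2; move/negP: sub; apply.
  have : E == E' by rewrite finset.eqEcard (card_S hE) (card_S hE') leqnn andbT.
  by move/eqP => ->; exact: subxx.
have [e heE heE'] := subsetPn sub2.
pose F := X E' e' e.
have hl : e \in L E' e'.
  rewrite /L finset.in_setD finset.in_setD1 (negbTE heE') andbF /=.
  by move/subsetP: (sub_pairs hE); apply.
have hF : F \in S by exact: X_in.
have c1 : cond E' F (e', e) by rewrite /cond /= he'E' hl eqxx.
have c2 := cond_swap (sub_pairs hE') c1.
apply: le_trans (Pk_step j _ _ F).
apply: ler_pM => //; first exact: exprn_ge0.
  apply: IH => //.
  have pr : F :\: E \proper E' :\: E.
    apply/properP; split.
      apply/subsetP => x; rewrite !finset.in_setD => /andP[hxE].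
      rewrite /F /X finset.in_setU finset.in_set1 finset.in_setD1.
      case/orP => [/andP[_ ->] | /eqP hx]; first by rewrite hxE.
      by rewrite hx heE in hxE.
    exists e'; first by rewrite finset.in_setD he'E' he'E.
    rewrite finset.in_setD he'E /= /F /X finset.in_setU finset.in_set1 finset.in_setD1 eqxx /=.
    by apply/eqP => h; rewrite h heE in he'E.
  by rewrite -ltnS; exact: (leq_trans (proper_card pr) hc).
exact: rp_lb c2.
Qed.

End Concrete.


Theorem corollary3p4 (R : realType) (N M : nat) (G0 : network N) :
  (0 < M)%N -> G0 \in GNM N M ->
  forall s : network N, s \in GNM N M ->
    (fun t : nat => rewire_dist R G0 t s) @ \oo --> ((#|GNM N M|%:R)^-1 : R).
Proof.
move=> M0 hG0 s hs.
apply: (@mu_cvg R _ (GNM N M) (@rewire_prob R N) (rewire_dist R G0) G0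
  (@rp_ge0 R N) (@rp_out R N M M0) (@rp_row R N M M0) (@rp_col R N M M0) hG0
  (fun _ => erefl) (fun _ _ => erefl) M
  (((M * (#|node_pairs N| - M).+1)%:R)^-1 ^+ M) M0) => //.
  by rewrite exprn_gt0 // invr_gt0 (@d_gt0 R N M M0).
move=> x y hx hy; apply: (@Pk_lb R N M M0) => //.
apply: leq_trans (subset_leq_card (subsetDl y x)) _.
by move: hy; rewrite inE => /andP[_ /eqP ->].
Qed.
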